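(* Let $k\ge 1$ and let $t_1\ge s_1\ge t_2\ge s_2\ge\cdots\ge t_k\ge s_k\ge 0=:t_{k+1}$ be integers. Let $\tilde A+\lambda\tilde E$ be a complex matrix pencil partitioned into $k$ block rows of sizes $s_1,\dots,s_k$ and $k$ block columns of sizes $t_1,\dots,t_k$, of the form \[ \tilde A+\lambda\tilde E=\begin{bmatrix} 0 & A_{1,2} & \cdots & A_{1,k}\\ & \ddots & \ddots & \vdots\\ & & \ddots & A_{k-1,k}\\ & & & 0\end{bmatrix}+\lambda\begin{bmatrix} E_{1,1} & E_{1,2} & \cdots & E_{1,k}\\ & \ddots & \ddots & \vdots\\ & & \ddots & E_{k-1,k}\\ & & & E_{k,k}\end{bmatrix}, \] where $A_{i,j},E_{i,j}\in\mathbb{C}^{s_i\times t_j}$, all blocks below the block diagonal (for both matrices) and the block-diagonal blocks of $\tilde A$ are zero, and the ''stairs'' have the special form \[ A_{i,i+1}=\begin{bmatrix}\hat A_{i,i+1}\\ 0\end{bmatrix},\qquad E_{i,i}=\begin{bmatrix}0 & \hat E_{i,i}\end{bmatrix}, \] with $\hat A_{i,i+1}\in\mathbb{C}^{t_{i+1}\times t_{i+1}}$ and $\hat E_{i,i}\in\mathbb{C}^{s_i\times s_i}$ upper triangular and invertible. Then there exist unit upper triangular (invertible) matrices $S$ and $T$ such that \[ S^{-1}(\tilde A+\lambda\tilde E)T=\begin{bmatrix}\lambda E_{1,1} & A_{1,2} & 0 & 0\\ & \ddots & \ddots & 0\\ & & \ddots & A_{k-1,k}\\ & & & \lambda E_{k,k}\end{bmatrix},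 \] i.e. all blocks other than the blocks $E_{i,i}$ (in the $\lambda$-coefficient) and $A_{i,i+1}$ (in the constant coefficient) are eliminated, while the blocks $E_{i,i}$ and $A_{i,i+1}$ themselves are left unaltered; so the transformed pencil is block bidiagonal.
   Context: A matrix is unit upper triangular if it is upper triangular with all diagonal entries equal to $1$. The block partition of the transformed pencil is the same as that of $\tilde A+\lambda\tilde E$. *)

(* Defs.v *)
From HB Require Import structures.
From mathcomp Require Import all_boot all_order all_algebra.
From mathcomp Require Import complex.
From mathcomp Require Import reals Rstruct.
Set Implicit Arguments. Unset Strict Implicit. Unset Printing Implicit Defensive.
Import Order.TTheory GRing.Theory Num.Theory.
Local Open Scope ring_scope.

Notation CC := (complex Rdefinitions.R).

Definition upper_tri (F : pzRingType) (n : nat) (M : 'M[F]_n) : Prop :=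
  forall r c : 'I_n, (c < r)%N -> M r c = 0.

Definition unit_upper_tri (F : pzRingType) (n : nat) (M : 'M[F]_n) : Prop :=
  upper_tri M /\ forall r : 'I_n, M r r = 1.

(* the top m x q submatrix (first m rows) of B : 'M_(p,q) (padded by 0 if m > p) *)
Definition topblock (F : pzRingType) (m p q : nat) (B : 'M[F]_(p, q)) : 'M[F]_(m, q) :=
  \matrix_(r < m, c < q) (if @insub nat (fun x => (x < p)%N) 'I_p (val r) is Some r'
                          then B r' c else 0).

(* the right p x m submatrix (last m columns) of B : 'M_(p,q), for m <= q *)
Definition rightblock (F : pzRingType) (m p q : nat) (B : 'M[F]_(p, q)) : 'M[F]_(p, m) :=
  \matrix_(r < p, c < m) (if @insub nat (fun x => (x < q)%N) 'I_q (val c + (q - m))%N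
                          is Some c' then B r c' else 0).

(* Main.v *)
Require Import Defs.
From HB Require Import structures.
From mathcomp Require Import all_boot all_order all_algebra.
From mathcomp Require Import complex.
From mathcomp Require Import reals Rstruct.
From mathcomp Require Import zify.
Import Order.TTheory GRing.Theory Num.Theory.
Local Open Scope ring_scope.
Set Implicit Arguments. Unset Strict Implicit. Unset Printing Implicit Defensive.



Lemma submx_mul (F : fieldType) p q r (p_ : 'I_p -> nat) (q_ : 'I_q -> nat) (r_ : 'I_r -> nat)
  (X : 'M[F]_(\sum_i p_ i, \sum_i q_ i)) (Y : 'M[F]_(\sum_i q_ i, \sum_i r_ i)) i j :
  submxblock (X *m Y) i j = \sum_l submxblock X i l *m submxblock Y l j.
Proof.
have := mul_mxblock (submxblock X) (submxblock Y).
by rewrite !submxblockK => ->; rewrite mxblockK.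
Qed.

Lemma strict_mxblock (F : fieldType) p (p_ : 'I_p -> nat) (B : forall i j, 'M[F]_(p_ i, p_ j)) :
  (forall i j : 'I_p, ~~ (i < j)%N -> B i j = 0) ->
  forall r c : 'I_(\sum_i p_ i), (c <= r)%N -> mxblock B r c = 0.
Proof.
move=> H r c cr; rewrite mxE H ?mxE //.
have : (tagnat.sig1 c <= tagnat.sig1 r)%O by apply: tagnat.le_sig1.
by rewrite leEord -leqNgt.
Qed.

Lemma unit_tri (F : fieldType) n (N : 'M[F]_n) :
  (forall r c : 'I_n, (c <= r)%N -> N r c = 0) ->
  unit_upper_tri (1%:M + N) /\ (1%:M + N) \in unitmx.
Proof.
move=> H.
have U : unit_upper_tri (1%:M + N).
  split=> [r c cr|r]; rewrite !mxE ?H ?addr0 ?eqxx //; last exact: ltnW.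
  by rewrite (_ : (r == c) = false) // -val_eqE /= gtn_eqF.
split=> //; rewrite unitmxE -det_tr det_trig.
  by rewrite big1 ?unitr1 // => i _; rewrite mxE (U.2 i).
by apply/is_trig_mxP => i j ij; rewrite mxE (U.1 j i).
Qed.

Section Fix.
Variable F : fieldType.
Variable k : nat.
Variables s t : 'I_k -> nat.
Variables A E : 'M[F]_(\sum_(i < k) s i, \sum_(j < k) t j).
Local Notation sS := (\sum_(i < k) s i)%N.
Local Notation sT := (\sum_(j < k) t j)%N.

Local Notation ab i j := (submxblock A i j).
Local Notation eb i j := (submxblock E i j).
Definition Ehat i : 'M[F]_(s i) := rightblock (s i) (eb i i).
Definition Pm i : 'M[F]_(t i, s i) := \matrix_(c, r) ((val c == val r + (t i - s i))%N)%:R.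
Definition Einv i : 'M[F]_(t i, s i) := Pm i *m invmx (Ehat i).
Definition Ahat l j : 'M[F]_(t j) := topblock (t j) (ab l j).
Definition Qm l j : 'M[F]_(t j, s l) := \matrix_(c, r) (val r == val c)%:R.
Definition Ainv l j : 'M[F]_(t j, s l) := invmx (Ahat l j) *m Qm l j.

Definition PhiS (NS : 'M[F]_sS) (NT : 'M[F]_sT) : 'M[F]_sS :=
  @mxblock F k k s s (fun i l => if (i < l)%N then
    \sum_(j : 'I_k | val j == (val l).+1)
       (ab i j + \sum_(m : 'I_k | (i < m)%N) ab i m *m submxblock NT m j) *m Ainv l j
    else 0).
Definition PhiT (NS : 'M[F]_sS) (NT : 'M[F]_sT) : 'M[F]_sT :=
  @mxblock F k k t t (fun i j => if (i < j)%N then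
    Einv i *m (submxblock NS i j *m eb j j - eb i j
               - \sum_(m : 'I_k | (i < m)%N) eb i m *m submxblock NT m j)
    else 0).
Definition Phi (x : 'M[F]_sS * 'M[F]_sT) := (PhiS x.1 x.2, PhiT x.1 x.2).

Definition rankS (i j : 'I_k) : nat := if (i < j)%N then (2 * ((j - i) * k + (k - i)))%N else 0%N.
Definition rankT (i j : 'I_k) : nat := if (i < j)%N then (2 * ((j - i) * k + (k - i))).+1%N else 0%N.

Definition agree R (x y : 'M[F]_sS * 'M[F]_sT) :=
  (forall i j, (rankS i j < R)%N -> submxblock x.1 i j = submxblock y.1 i j) /\
  (forall i j, (rankT i j < R)%N -> submxblock x.2 i j = submxblock y.2 i j).

Lemma depS x y i l : agree (rankS i l) x y ->
  submxblock (Phi x).1 i l = submxblock (Phi y).1 i l.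
Proof.
case=> _ HT; rewrite /= /PhiS !mxblockK; case: ifP => // il.
apply: eq_bigr => j /eqP jl; congr (_ *m _); congr (_ + _).
apply: eq_bigr => m im; rewrite HT //.
rewrite /rankT /rankS il.
have := ltn_ord i; have := ltn_ord m; have := ltn_ord l; have := ltn_ord j.
case: ifP => mj; move: il mj im jl; rewrite /=; nia.
Qed.

Lemma depT x y i j : agree (rankT i j) x y ->
  submxblock (Phi x).2 i j = submxblock (Phi y).2 i j.
Proof.
case=> HS HT; rewrite /= /PhiT !mxblockK; case: ifP => // ij.
rewrite HS; last by rewrite /rankT /rankS ij.
congr (_ *m (_ - _)); apply: eq_bigr => m im; rewrite HT //.
rewrite /rankT ij.
have := ltn_ord i; have := ltn_ord m; have := ltn_ord j.
case: ifP => mj; move: ij mj im; rewrite /=; nia.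
Qed.

Definition X r := iter r Phi (0, 0).

Lemma X_agree r : agree r (X r) (X r.+1).
Proof.
elim: r => [|r [IS IT]]; first by split.
split=> i j lt; rewrite /X !iterS.
  apply: depS; split=> i' j' lt'; [apply: IS|apply: IT]; exact: leq_trans lt' lt.
apply: depT; split=> i' j' lt'; [apply: IS|apply: IT]; exact: leq_trans lt' lt.
Qed.

Definition Nfix := (2 * (k * k + k)).+2.

Lemma fixpt : Phi (X Nfix) = X Nfix.
Proof.
have [IS IT] := X_agree Nfix.
have -> : Phi (X Nfix) = X Nfix.+1 by rewrite /X iterS.
case E1 : (X Nfix) => [a b]; case E2 : (X Nfix.+1) => [c d].
rewrite E1 E2 /= in IS IT.
congr pair; apply/mxblockP => i j; apply/esym.
  apply: IS; rewrite /rankS /Nfix; case: ifP => // ij.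
  have := ltn_ord i; have := ltn_ord j; move: ij; nia.
apply: IT; rewrite /rankT /Nfix; case: ifP => // ij.
have := ltn_ord i; have := ltn_ord j; move: ij; nia.
Qed.


Lemma fix_ex : exists NS NT, PhiS NS NT = NS /\ PhiT NS NT = NT.
Proof.
exists (X Nfix).1, (X Nfix).2.
by have := fixpt; case: (X Nfix) => a b [-> ->].
Qed.

Section Sol.
Variables (NS : 'M[F]_sS) (NT : 'M[F]_sT).
Hypotheses (NS_fix : PhiS NS NT = NS) (NT_fix : PhiT NS NT = NT).

Lemma ns0 (i l : 'I_k) : ~~ (i < l)%N -> submxblock NS i l = 0.
Proof. by move=> /negbTE il; rewrite -NS_fix /PhiS mxblockK il. Qed.
Lemma nt0 (i l : 'I_k) : ~~ (i < l)%N -> submxblock NT i l = 0.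
Proof. by move=> /negbTE il; rewrite -NT_fix /PhiT mxblockK il. Qed.

Lemma ePm i : (s i <= t i)%N -> eb i i *m Pm i = Ehat i.
Proof.
move=> st; apply/matrixP => r r'; rewrite !mxE.
have lt : (r' + (t i - s i) < t i)%N by have := ltn_ord r'; lia.
rewrite (bigD1 (Ordinal lt)) //= [Pm i _ r']mxE eqxx mulr1 big1 ?addr0 => [|c nc]; last first.
  rewrite [Pm i _ r']mxE; case: eqP => [h|_]; last by rewrite mulr0.
  by case/eqP: nc; apply/val_inj.
case: insubP => [c' _ vc'|]; last by rewrite /= lt.
by congr (_ _ _); apply/val_inj.
Qed.

Lemma QmA l j : Qm l j *m ab l j = Ahat l j.
Proof.
apply/matrixP => c c'; rewrite !mxE.
case: insubP => [r' _ vr'|nc].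
  rewrite (bigD1 r') //= mxE vr' eqxx mul1r big1 ?addr0 // => r nr.
  rewrite mxE; case: eqP => [h|_]; last by rewrite mul0r.
  by case/eqP: nr; apply/val_inj; rewrite h vr'.
rewrite big1 // => r _; rewrite mxE; case: eqP => [h|_]; last by rewrite mul0r.
by move: nc; rewrite -h ltn_ord.
Qed.

Lemma e_Einv i : (s i <= t i)%N -> Ehat i \in unitmx -> eb i i *m Einv i = 1%:M.
Proof. by move=> st u; rewrite /Einv mulmxA ePm // mulmxV. Qed.

Lemma Ainv_a l j : Ahat l j \in unitmx -> Ainv l j *m ab l j = 1%:M.
Proof. by move=> u; rewrite /Ainv -mulmxA QmA mulVmx. Qed.

Lemma e_nt (i j : 'I_k) : (s i <= t i)%N -> Ehat i \in unitmx -> (i < j)%N ->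
  eb i i *m submxblock NT i j = submxblock NS i j *m eb j j - eb i j
               - \sum_(m : 'I_k | (i < m)%N) eb i m *m submxblock NT m j.
Proof.
move=> st u ij; rewrite -[in LHS]NT_fix /PhiT mxblockK ij.
by rewrite mulmxA e_Einv // mul1mx.
Qed.

Lemma ns_a (i l j : 'I_k) : Ahat l j \in unitmx -> (i < l)%N -> val j = (val l).+1 ->
  submxblock NS i l *m ab l j =
    ab i j + \sum_(m : 'I_k | (i < m)%N) ab i m *m submxblock NT m j.
Proof.
move=> u il jl; rewrite -[in LHS]NS_fix /PhiS mxblockK il.
rewrite (big_pred1 j) => [|j'] /=; last first.
  by apply/eqP/eqP => [h|->//]; apply/val_inj; rewrite /= h.
by rewrite -mulmxA Ainv_a // mulmx1.
Qed.


Hypotheses (HlowA : forall i j : 'I_k, (j < i)%N -> ab i j = 0)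
  (HlowE : forall i j : 'I_k, (j < i)%N -> eb i j = 0)
  (Hdiag : forall i : 'I_k, ab i i = 0)
  (HAu : forall l j : 'I_k, val j = (val l).+1 -> Ahat l j \in unitmx)
  (HEu : forall i : 'I_k, Ehat i \in unitmx)
  (Hst : forall i : 'I_k, (s i <= t i)%N).

Lemma sum_a (i : 'I_k) n (Y : forall m : 'I_k, 'M[F]_(t m, n)) :
  \sum_m ab i m *m Y m = \sum_(m : 'I_k | (i < m)%N) ab i m *m Y m.
Proof.
rewrite (bigID (fun m : 'I_k => (i < m)%N)) /= [X in _ + X]big1 ?addr0 // => m.
rewrite -leqNgt leq_eqVlt => /orP[/eqP mi|mi]; last by rewrite HlowA ?mul0mx.
have -> : m = i by apply/val_inj; rewrite /= mi.
by rewrite Hdiag mul0mx.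
Qed.

Lemma sum_e (i : 'I_k) n (Y : forall m : 'I_k, 'M[F]_(t m, n)) :
  \sum_m eb i m *m Y m = eb i i *m Y i + \sum_(m : 'I_k | (i < m)%N) eb i m *m Y m.
Proof.
rewrite (bigID (fun m : 'I_k => (i < m)%N)) /= addrC; congr (_ + _).
rewrite (bigD1 i) ?ltnn //= big1 ?addr0 // => m /andP[nim mi].
have lt : (m < i)%N by rewrite ltn_neqAle leqNgt nim andbT val_eqE.
by rewrite HlowE ?mul0mx.
Qed.

Lemma main_sol : exists (S : 'M[F]_sS) (T : 'M[F]_sT),
    unit_upper_tri S /\ unit_upper_tri T /\
    (forall i j : 'I_k,
       submxblock (invmx S *m A *m T) i j =
         (if val j == (val i).+1 then submxblock A i j else 0)
       /\ (j != i -> submxblock (invmx S *m E *m T) i j = 0)) /\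
    (forall i : 'I_k, submxblock (invmx S *m E *m T) i i = submxblock E i i).
Proof.
have [uS Su] : unit_upper_tri (1%:M + NS) /\ (1%:M + NS) \in unitmx.
  by apply: unit_tri; rewrite -NS_fix; apply: strict_mxblock => i j /negbTE ->.
have [uT _] : unit_upper_tri (1%:M + NT) /\ (1%:M + NT) \in unitmx.
  by apply: unit_tri; rewrite -NT_fix; apply: strict_mxblock => i j /negbTE ->.
pose Abd := @mxblock F k k s t (fun i j =>
   if val j == (val i).+1 then submxblock A i j else 0).
pose Ed := @mxblock F k k s t (fun i j => if i == j then submxblock E i j else 0).
have eqA : A *m (1%:M + NT) = (1%:M + NS) *m Abd.
  apply/mxblockP => i j.
  rewrite mulmxDr mulmx1 mulmxDl mul1mx !submxblockD !submx_mul mxblockK.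
  under [X in _ = _ + X]eq_bigr do rewrite mxblockK.
  rewrite sum_a.
  have [ji|ij] := leqP j i.+1.
    have -> : \sum_(m : 'I_k | (i < m)%N) ab i m *m submxblock NT m j = 0.
      by apply: big1 => m im; rewrite nt0 ?mulmx0 // -leqNgt; lia.
    rewrite [X in _ = _ + X]big1 ?addr0 => [|l _]; last first.
      case: eqP => [jl|_]; last by rewrite mulmx0.
      by rewrite ns0 ?mul0mx // -leqNgt; move: jl ji => /= jl ji; lia.
    case: eqP => [//|nj].
    have [ji'|ij'] := leqP j i.
      rewrite leq_eqVlt in ji'; case/orP: ji' => [/eqP ji'|ji']; last by rewrite HlowA.
      have -> : j = i by apply/val_inj.
      exact: Hdiag.
    by exfalso; move: nj => /= nj; lia.
  have jp : (j.-1 < k)%N by have := ltn_ord j; lia.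
  rewrite (_ : (val j == (val i).+1) = false); last by apply/eqP => /=; lia.
  rewrite add0r [in RHS](bigD1 (Ordinal jp)) //= [in RHS]big1 ?addr0 => [|l nl]; last first.
    case: eqP => [jl|_]; last by rewrite mulmx0.
    by case/eqP: nl; apply/val_inj; rewrite /= jl; lia.
  rewrite (_ : (val j == (j.-1).+1)); last by apply/eqP => /=; lia.
  by rewrite ns_a //; [apply: HAu | |]; rewrite /=; lia.
have eqE : E *m (1%:M + NT) = (1%:M + NS) *m Ed.
  apply/mxblockP => i j.
  rewrite mulmxDr mulmx1 mulmxDl mul1mx !submxblockD !submx_mul mxblockK.
  under [X in _ = _ + X]eq_bigr do rewrite mxblockK.
  rewrite sum_e [in RHS](bigD1 j) //= eqxx [in RHS]big1 ?addr0 => [|l /negbTE ->]; last by rewrite mulmx0.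
  have [ij|ji] := ltnP i j.
    rewrite e_nt // subrK addrC subrK.
    by rewrite (_ : (i == j) = false) ?add0r // -val_eqE /= ltn_eqF.
  have -> : \sum_(m : 'I_k | (i < m)%N) eb i m *m submxblock NT m j = 0.
    by apply: big1 => m im; rewrite nt0 ?mulmx0 // -leqNgt; lia.
  rewrite nt0 -?leqNgt // ns0 -?leqNgt // mulmx0 mul0mx !addr0.
  case: eqP => // nij; rewrite HlowE //.
  by rewrite ltn_neqAle ji andbT; apply/eqP => h; apply: nij; apply/val_inj.
exists (1%:M + NS), (1%:M + NT); split=> //; split=> //.
rewrite -!mulmxA eqA eqE !mulKmx //; split=> [i j|i].
  by rewrite !mxblockK; split=> // /negbTE; rewrite eq_sym => ->.
by rewrite mxblockK eqxx.
Qed.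

End Sol.
End Fix.

Unset Implicit Arguments.

Theorem lemma4p1 (k : nat) (s t : 'I_k -> nat)
  (A E : 'M[CC]_(\sum_(i < k) s i, \sum_(j < k) t j)) :
  (0 < k)%N ->
  (* t_1 >= s_1 >= t_2 >= s_2 >= ... >= t_k >= s_k >= 0 *)
  (forall i : 'I_k, (s i <= t i)%N) ->
  (forall i j : 'I_k, val j = (val i).+1 -> (t j <= s i)%N) ->
  (* blocks strictly below the block diagonal vanish, for both matrices *)
  (forall i j : 'I_k, (j < i)%N ->
     submxblock A i j = 0 /\ submxblock E i j = 0) ->
  (* the block-diagonal blocks of A vanish *)
  (forall i : 'I_k, submxblock A i i = 0) ->
  (* A_{i,i+1} = [hat A_{i,i+1}; 0], hat A_{i,i+1} square upper triangular invertible *)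
  (forall i j : 'I_k, val j = (val i).+1 ->
     (forall (r : 'I_(s i)) (c : 'I_(t j)), (t j <= r)%N -> submxblock A i j r c = 0)
     /\ upper_tri (topblock (t j) (submxblock A i j))
     /\ topblock (t j) (submxblock A i j) \in unitmx) ->
  (* E_{i,i} = [0, hat E_{i,i}], hat E_{i,i} square upper triangular invertible *)
  (forall i : 'I_k,
     (forall (r : 'I_(s i)) (c : 'I_(t i)), (c < t i - s i)%N -> submxblock E i i r c = 0)
     /\ upper_tri (rightblock (s i) (submxblock E i i))
     /\ rightblock (s i) (submxblock E i i) \in unitmx) ->
  exists (S : 'M[CC]_(\sum_(i < k) s i)) (T : 'M[CC]_(\sum_(j < k) t j)),
    unit_upper_tri S /\ unit_upper_tri T /\
    (forall i j : 'I_k,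
       submxblock (invmx S *m A *m T) i j =
         (if val j == (val i).+1 then submxblock A i j else 0)
       /\ (j != i -> submxblock (invmx S *m E *m T) i j = 0)) /\
    (forall i : 'I_k, submxblock (invmx S *m E *m T) i i = submxblock E i i).
Proof.
move=> k0 Hst Hts Hlow Hdiag HA HE.
have [NS [NT [H1 H2]]] := fix_ex A E.
apply: (main_sol H1 H2) => //.
- by move=> i j /Hlow[].
- by move=> i j /Hlow[].
- by move=> l j /HA[_ []].
- by move=> i; case: (HE i) => _ [].
Qed.
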